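(* Let $\mathcal{H}$ be a projection-closed class of graphs. Then one of the following holds: (i) $\mathcal{H}$ contains $K_t$ for every $t\ge 1$; (ii) $\mathcal{H}$ contains $K_{t,t,t}$ for every $t\ge 1$; (iii) there is a $\mu\ge 0$ such that every $H\in\mathcal{H}$ has distance at most $\mu$ to extended bicliques.
   Context: A graph $H'$ is a projection of $H$ if $H'$ can be obtained from $H$ by a sequence of vertex deletions and identifications of two nonadjacent vertices; a class of graphs (closed under isomorphism) is projection-closed if it contains every projection of each of its members. $K_{t,t,t}$ is the complete tripartite graph with three parts of size $t$. An extended biclique is a complete bipartite graph together with a set of isolated vertices; the distance of $H$ to extended bicliques is the minimum number of vertices to delete from $H$ to obtain an extended biclique. *)

(* Defs.v *)
From mathcomp Require Import all_boot.
From Stdlib Require Relation_Operators.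
Set Implicit Arguments. Unset Strict Implicit. Unset Printing Implicit Defensive.

Record sgraph : Type := SGraph {
  vert : finType;
  adj : rel vert;
  adj_sym : symmetric adj;
  adj_irr : irreflexive adj }.
Arguments adj : clear implicits.

Definition graph_class := sgraph -> Prop.

Definition isomorphic (G G' : sgraph) : Prop :=
  exists f : vert G -> vert G', bijective f /\
    forall x y, adj G' (f x) (f y) = adj G x y.

Definition iso_closed (C : graph_class) : Prop :=
  forall G G', isomorphic G G' -> C G -> C G'.

(* G' is (isomorphic to) the graph obtained from G by deleting vertex v:
   f identifies the vertices of G' with the vertices of G other than v. *)
Definition deletion_step (G G' : sgraph) : Prop :=
  exists (v : vert G) (f : vert G' -> vert G),
    [/\ injective f, (forall x, f x != v), (forall y, y != v -> exists x, f x = y)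
      & forall x y, adj G' x y = adj G (f x) (f y)].

(* G' is (isomorphic to) the graph obtained from G by identifying two distinct
   nonadjacent vertices u and v: v is removed and u receives the union of the
   neighbourhoods of u and v. *)
Definition identification_step (G G' : sgraph) : Prop :=
  exists (u v : vert G) (f : vert G' -> vert G),
    [/\ u != v, ~~ adj G u v &
    [/\ injective f, (forall x, f x != v), (forall y, y != v -> exists x, f x = y)
      & forall x y, adj G' x y =
          [|| adj G (f x) (f y),
              (f x == u) && adj G v (f y)
            | (f y == u) && adj G (f x) v]]].

Definition projection_step (G G' : sgraph) : Prop :=
  deletion_step G G' \/ identification_step G G'.

Definition projection_of (H H' : sgraph) : Prop :=
  Relation_Operators.clos_refl_trans sgraph projection_step H H'.

Definition projection_closed (C : graph_class) : Prop :=
  iso_closed C /\ forall H H', C H -> projection_of H H' -> C H'.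

Definition Kadj (t : nat) : rel 'I_t := fun x y => x != y.
Lemma Kadj_sym t : symmetric (Kadj (t:=t)).
Proof. by move=> x y; rewrite /Kadj eq_sym. Qed.
Lemma Kadj_irr t : irreflexive (Kadj (t:=t)).
Proof. by move=> x; rewrite /Kadj eqxx. Qed.
Definition complete_graph (t : nat) : sgraph :=
  SGraph (@Kadj_sym t) (@Kadj_irr t).

Definition K3adj (t : nat) : rel ('I_3 * 'I_t) := fun x y => x.1 != y.1.
Lemma K3adj_sym t : symmetric (K3adj (t:=t)).
Proof. by move=> x y; rewrite /K3adj eq_sym. Qed.
Lemma K3adj_irr t : irreflexive (K3adj (t:=t)).
Proof. by move=> x; rewrite /K3adj eqxx. Qed.
Definition complete_tripartite (t : nat) : sgraph :=
  SGraph (@K3adj_sym t) (@K3adj_irr t).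

(* Distance of G to extended bicliques is at most mu: deleting a set S of at
   most mu vertices leaves a complete bipartite graph between (possibly empty)
   sides A, B plus isolated vertices (those outside S, A, B). *)
Definition dist_ext_biclique_le (G : sgraph) (mu : nat) : Prop :=
  exists S A B : {set vert G},
    [/\ #|S| <= mu, [disjoint S & A], [disjoint S & B], [disjoint A & B]
      & forall x y, x \notin S -> y \notin S ->
          adj G x y = ((x \in A) && (y \in B)) || ((x \in B) && (y \in A))].

(* Main.v *)
Require Import Defs.
From mathcomp Require Import all_boot zify.
From Stdlib Require Import Classical.
From Stdlib Require Relation_Operators.
Set Implicit Arguments. Unset Strict Implicit. Unset Printing Implicit Defensive.


Definition fam_ok (P : Type) (A : P -> P -> bool) (G : sgraph)
  (psi : P -> option (vert G)) :=
  [/\ (forall i, exists p, psi p = Some i),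
      (forall p q i j, psi p = Some i -> psi q = Some j -> A p q -> adj G i j)
    & (forall i j, adj G i j -> exists p q, [/\ psi p = Some i, psi q = Some j & A p q])].
Arguments fam_ok {P} A G psi.

Lemma insub_ordP n k (i : 'I_n) : insub k = Some i -> val i = k.
Proof. by case: insubP => // u _ hu [<-]. Qed.


Definition tb6 (b01 b02 b03 b12 b13 b23 : bool) (q q' : nat) : bool :=
  match q, q' with
  | 0, 1 | 1, 0 => b01 | 0, 2 | 2, 0 => b02 | 0, 3 | 3, 0 => b03
  | 1, 2 | 2, 1 => b12 | 1, 3 | 3, 1 => b13 | 2, 3 | 3, 2 => b23
  | _, _ => false
  end.

Lemma insub_ordE n k (i : 'I_n) : val i = k -> insub k = Some i.
Proof. by move=> <-; exact: valK. Qed.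


Section Del.
Variables (H : sgraph) (v : vert H).
Definition del_adj : rel {x : vert H | x != v} := fun x y => adj H (val x) (val y).
Lemma del_sym : symmetric del_adj. Proof. by move=> x y; rewrite /del_adj adj_sym. Qed.
Lemma del_irr : irreflexive del_adj. Proof. by move=> x; rewrite /del_adj adj_irr. Qed.
Definition delG := @SGraph _ del_adj del_sym del_irr.

Lemma delG_step : projection_step H delG.
Proof.
left; exists v, val; split => //.
- exact: val_inj.
- by move=> x; apply: (valP x).
- by move=> y hy; exists (exist _ y hy).
Qed.

Lemma delG_card : #|vert delG| = #|vert H|.-1.
Proof. by rewrite /= card_sig -(cardC1 v). Qed.
End Del.

Section Ident.
Variables (H : sgraph) (u v : vert H).
Hypothesis (huv : u != v) (nuv : ~~ adj H u v).
Definition id_adj : rel {x : vert H | x != v} := fun x y =>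
  [|| adj H (val x) (val y), (val x == u) && adj H v (val y)
    | (val y == u) && adj H (val x) v].
Lemma id_sym : symmetric id_adj.
Proof.
move=> x y; rewrite /id_adj (adj_sym (val x)) (adj_sym v (val x)) (adj_sym (val y) v).
by case: (adj H (val y) (val x)); case: (_ && _); case: (_ && _).
Qed.
Lemma id_irr : irreflexive id_adj.
Proof.
move=> x; rewrite /id_adj adj_irr /=.
case: eqP => [->|] //=; rewrite adj_sym (negbTE nuv) //.
Qed.
Definition idG := @SGraph _ id_adj id_sym id_irr.

Lemma idG_step : projection_step H idG.
Proof.
right; exists u, v, val; split => //; split => //.
- exact: val_inj.
- by move=> x; apply: (valP x).
- by move=> y hy; exists (exist _ y hy).
Qed.

Lemma idG_card : #|vert idG| = #|vert H|.-1.
Proof. by rewrite /= card_sig -(cardC1 v). Qed.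
End Ident.

Lemma quotient_closed (C : graph_class) (HC : projection_closed C) (G : sgraph)
  (i0 : vert G) : forall n (H : sgraph), #|vert H| = n -> C H ->
  forall phi : vert H -> option (vert G), fam_ok (adj H) G phi -> C G.
Proof.
elim=> [|n IH] H hn CH phi [ha hc1 hc2].
-
  have [x _] := ha i0. by move: hn; rewrite (cardD1 x) inE.
case: (pickP (fun v => phi v == None)) => [v /eqP hv|hnone].
  apply: (IH (delG v) _ _ (fun x => phi (val x))).
  - by rewrite delG_card hn.
  - apply: (proj2 HC _ _ CH); apply: Relation_Operators.rt_step; exact: (delG_step v).
  split.
  - move=> i; have [x hx] := ha i.
    have hxv : x != v by apply/eqP => e; move: hx; rewrite e hv.
    by exists (exist _ x hxv).
  - by move=> p q i j hp hq; apply: hc1.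
  - move=> i j /hc2 [p [q [hp hq hpq]]].
    have hpv : p != v by apply/eqP => e; move: hp; rewrite e hv.
    have hqv : q != v by apply/eqP => e; move: hq; rewrite e hv.
    by exists (exist _ p hpv), (exist _ q hqv).
case: (pickP (fun uv : vert H * vert H => (uv.1 != uv.2) && (phi uv.1 == phi uv.2)))
  => [[u v] /andP[/= huv /eqP hphi]|hinj].
  have [i hu] : exists i, phi u = Some i.
    by case e: (phi u) => [i|]; [exists i | move: (hnone u); rewrite e].
  have hv : phi v = Some i by rewrite -hphi.
  have nuv : ~~ adj H u v.
    apply/negP => e; have := hc1 _ _ _ _ hu hv e; by rewrite adj_irr.

  apply: (IH (idG nuv) _ _ (fun x => phi (val x))).
  - by rewrite idG_card hn.
  - apply: (proj2 HC _ _ CH); apply: Relation_Operators.rt_step; exact: (idG_step huv nuv).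
  split.
  - move=> j; have [x hx] := ha j.
    case: (eqVneq x v) => [e|hxv].
      by exists (exist _ u huv); rewrite /= hu -hv -e.
    by exists (exist _ x hxv).
  - move=> [p hp] [q hq] j k /= hpj hqk /or3P [e|/andP[/eqP e1 e2]|/andP[/eqP e1 e2]].
    + exact: hc1 hpj hqk e.
    + by apply: (hc1 _ _ _ _ _ hqk e2); rewrite hv -hu -e1.
    + by apply: (hc1 _ _ _ _ hpj _ e2); rewrite hv -hu -e1.
  - move=> j k /hc2 [p [q [hp hq hpq]]].
    case: (eqVneq p v) => [ep|hpv].
      have hqv : q != v by apply/eqP => eq; move: hpq; rewrite ep eq adj_irr.
      exists (exist _ u huv), (exist _ q hqv); split => //=.
      + by rewrite hu -hv -ep.
      + by rewrite /id_adj /= eqxx -ep hpq orbT.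
    case: (eqVneq q v) => [eq|hqv].
      exists (exist _ p hpv), (exist _ u huv); split => //=.
      + by rewrite hu -hv -eq.
      + by rewrite /id_adj /= eqxx -eq hpq !orbT.
    exists (exist _ p hpv), (exist _ q hqv); split => //.
    by rewrite /= /id_adj /= hpq.
have hphi x : phi x != None by apply/negP => /eqP e; move: (hnone x); rewrite e eqxx.
have inj x y : phi x = phi y -> x = y.
  move=> e; apply/eqP; move: (hinj (x, y)) => /= /negbT; rewrite negb_and negbK e eqxx.
  by rewrite orbF.
pose f x := odflt i0 (phi x).
have hf x : phi x = Some (f x) by rewrite /f; case e: (phi x) (hphi x) => //.
have exi i : exists x, phi x == Some i by have [x hx] := ha i; exists x; apply/eqP.
pose g i := xchoose (exi i).
have hg i : phi (g i) = Some i by apply/eqP; exact: (xchooseP (exi i)).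
apply: (proj1 HC H G) CH; exists f; split.
  exists g => x; first by apply: inj; rewrite hg hf.
  by rewrite /f hg.
move=> x y; apply/idP/idP => [e|e].
  have [p [q [hp hq hpq]]] := hc2 _ _ e.
  have ep : x = p by apply: inj; rewrite hp hf.
  have eq : y = q by apply: inj; rewrite hq hf.
  by rewrite ep eq.
exact: (hc1 _ _ _ _ (hf x) (hf y) e).
Qed.
Section Struct.
Variables (m t1 t2 : nat) (A : 'I_m * 'I_4 -> 'I_m * 'I_4 -> bool)
  (L F : 'I_4 -> 'I_4 -> bool).
Hypotheses (Asym : forall p q, A p q = A q p) (Airr : forall p, A p p = false)
 (hL : forall (l l' : 'I_m) r s, l < l' -> A (l, r) (l', s) = L r s)
 (hF : forall (l : 'I_m) r s, A (l, r) (l, s) = F r s)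
 (hmK : t1.+1 * t1.+1 <= m) (hm1 : 2 * t1 <= m) (hm2 : 2 * t2 <= m).

Definition Aval (l l' : nat) r s :=
  if l < l' then L r s else if l' < l then L s r else F r s.

Lemma AE p q : A p q = Aval p.1 q.1 p.2 q.2.
Proof.
case: p q => [l r] [l' s]; rewrite /Aval /=.
case: ltngtP => h; first exact: hL.
- by rewrite Asym hL.
- have e : l = l' by apply: val_inj.
  by subst l'; exact: hF.
Qed.

Lemma m_pos : 0 < m. Proof. lia. Qed.
Definition l0 : 'I_m := Ordinal m_pos.

Lemma Firr r : F r r = false. Proof. by rewrite -(hF l0) Airr. Qed.
Lemma Fsym r s : F r s = F s r. Proof. by rewrite -!(hF l0) Asym. Qed.

Definition KF := exists psi : 'I_m * 'I_4 -> option 'I_t1,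
  fam_ok A (complete_graph t1) psi.
Definition TF := exists psi : 'I_m * 'I_4 -> option ('I_3 * 'I_t2),
  fam_ok A (complete_tripartite t2) psi.

Lemma ordm l : l < t1 -> l < m. Proof. lia. Qed.

Lemma caseC1 r : L r r -> KF.
Proof.
move=> hr.
exists (fun p => if p.2 == r then insub (val p.1) else None); split.
- move=> i; exists (Ordinal (ordm (ltn_ord i)), r) => /=.
  by rewrite eqxx; apply: insub_ordE.
- move=> [l q] [l' q'] i j /=.
  case: eqP => // -> /insub_ordP hi; case: eqP => // -> /insub_ordP hj hA.
  rewrite /Kadj; apply/eqP => eij; subst j.
  have e : l = l' by apply: ord_inj; rewrite -hi hj.
  by rewrite e Airr in hA.
- move=> i j /= hij.
  exists (Ordinal (ordm (ltn_ord i)), r), (Ordinal (ordm (ltn_ord j)), r).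
  split => /=; rewrite ?eqxx; try by apply: insub_ordE.
  rewrite AE /Aval /= hr; case: ltngtP => //= e.
  by move: hij; rewrite /Kadj (ord_inj e) eqxx.
Qed.


Lemma caseC2 r s : r != s -> L r s -> ~~ L s r -> (forall q, L q q = false) -> KF.
Proof.
move=> hrs Lrs Lsr hLd.
pose psi (p : 'I_m * 'I_4) : option 'I_t1 :=
  if p.2 == r then (if odd p.1 then insub (p.1 %/ 2) else None)
  else if p.2 == s then (if odd p.1 then None else insub (p.1 %/ 2)) else None.
have inv p i : psi p = Some i ->
    (p.2 = r /\ odd p.1 /\ val i = p.1 %/ 2) \/ (p.2 = s /\ ~~ odd p.1 /\ val i = p.1 %/ 2).
  rewrite /psi; case: eqP => [->|_].
    by case: ifP => // ho /insub_ordP hi; left.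
  case: eqP => [->|_] //.
  by case: ifP => // /negbT ho /insub_ordP hi; right.
exists psi; split.
- move=> i; have hl : (2 * i + 1) < m by have := ltn_ord i; lia.
  exists (Ordinal hl, r); rewrite /psi /= eqxx.
  have -> : odd (2 * i + 1) by lia.
  by apply: insub_ordE => /=; lia.
- move=> [l a] [l' b] i j /inv hp /inv hq; rewrite AE /= /Kadj.
  case: hp => [[/= -> [ho hi]]|[/= -> [ho hi]]];
  case: hq => [[/= -> [ho' hj]]|[/= -> [ho' hj]]];
  rewrite /Aval ?hLd ?Firr ?if_same //; apply: contraTneq => eij; subst j.
  + by case: ltngtP => h; [lia| rewrite (negbTE Lsr) | lia].
  + by case: ltngtP => h; [rewrite (negbTE Lsr) | lia | lia].
- move=> i j /= hij.
  case: (ltngtP i j) => h.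
  + have hl : 2 * i + 1 < m by have := ltn_ord j; lia.
    have hl' : 2 * j < m by have := ltn_ord j; lia.
    exists (Ordinal hl, r), (Ordinal hl', s); split.
    * rewrite /psi /= eqxx; have -> : odd (2 * i + 1) by lia.
      by apply: insub_ordE => /=; lia.
    * rewrite /psi /= eq_sym (negbTE hrs) eqxx; have -> : odd (2 * j) = false by lia.
      by apply: insub_ordE => /=; lia.
    * by rewrite AE /Aval /=; case: ltngtP => h'; [done | lia | lia].
  + have hl : 2 * i < m by have := ltn_ord i; lia.
    have hl' : 2 * j + 1 < m by have := ltn_ord i; lia.
    exists (Ordinal hl, s), (Ordinal hl', r); split.
    * rewrite /psi /= eq_sym (negbTE hrs) eqxx; have -> : odd (2 * i) = false by lia.
      by apply: insub_ordE => /=; lia.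
    * rewrite /psi /= eqxx; have -> : odd (2 * j + 1) by lia.
      by apply: insub_ordE => /=; lia.
    * by rewrite AE /Aval /=; case: ltngtP => h'; [lia | done | lia].
  + by move: hij; rewrite /Kadj (ord_inj h) eqxx.
Qed.

Lemma caseC3 r s : r != s -> L r s -> L s r -> ~~ F r s -> KF.
Proof.
move=> hrs Lrs Lsr Frs.
pose psi (p : 'I_m * 'I_4) : option 'I_t1 :=
  if (p.2 == r) || (p.2 == s) then insub (val p.1) else None.
exists psi; split.
- move=> i; exists (Ordinal (ordm (ltn_ord i)), r).
  by rewrite /psi /= eqxx; apply: insub_ordE.
- move=> [l a] [l' b] i j; rewrite /psi /=.
  case: ifP => // hab /insub_ordP hi; case: ifP => // hb /insub_ordP hj.
  rewrite AE /Kadj /=; apply: contraTneq => eij; subst j.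
  have e : (l : nat) = l' by rewrite -hi hj.
  rewrite /Aval e ltnn.
  by case/orP: hab => /eqP ->; case/orP: hb => /eqP ->;
    rewrite ?Firr // ?(negbTE Frs) // Fsym (negbTE Frs).
- move=> i j /= hij.
  exists (Ordinal (ordm (ltn_ord i)), r), (Ordinal (ordm (ltn_ord j)), s); split.
  + by rewrite /psi /= eqxx; apply: insub_ordE.
  + by rewrite /psi /= eqxx orbT; apply: insub_ordE.
  + rewrite AE /Aval /=; case: ltngtP => // h.
    by move: hij; rewrite /Kadj (ord_inj h) eqxx.
Qed.

Lemma caseC4 r s : r != s -> ~~ L r s -> ~~ L s r -> F r s ->
  (forall q, L q q = false) -> KF.
Proof.
move=> hrs Lrs Lsr Frs hLd.
pose T := t1.+1.
pose psi (p : 'I_m * 'I_4) : option 'I_t1 :=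
  if p.1 %/ T < p.1 %% T then
    (if p.2 == r then insub (p.1 %/ T) else if p.2 == s then insub (p.1 %% T) else None)
  else None.
have inv p i : psi p = Some i -> p.1 %/ T < p.1 %% T /\
    ((p.2 = r /\ val i = p.1 %/ T) \/ (p.2 = s /\ val i = p.1 %% T)).
  rewrite /psi; case: ifP => // hlt.
  case: eqP => [-> /insub_ordP hi|_]; first by split => //; left.
  by case: eqP => [-> /insub_ordP hi|_] //; split => //; right.
exists psi; split.
- move=> i; have hl : i * T + t1 < m.
    have h1 : i * T <= t1 * T by rewrite leq_mul2r; apply/orP; right; apply: ltnW.
    have h2 : T * T = t1 * T + T by rewrite mulSn addnC.
    move: hmK; rewrite -/T; lia.
  exists (Ordinal hl, r); rewrite /psi /= eqxx.
  have e1 : (i * T + t1) %/ T = i by rewrite divnMDl // divn_small // addn0.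
  have e2 : (i * T + t1) %% T = t1 by rewrite modnMDl modn_small.
  rewrite e1 e2 ltn_ord; exact: insub_ordE.
- move=> [l a] [l' b] i j /inv [hlt hp] /inv [hlt' hq]; rewrite AE /= /Kadj.
  rewrite /Aval; case: ltngtP => hll.
  + by case: hp => [[/= -> _]|[/= -> _]]; case: hq => [[/= -> _]|[/= -> _]];
      rewrite ?hLd ?(negbTE Lrs) ?(negbTE Lsr).
  + by case: hp => [[/= -> _]|[/= -> _]]; case: hq => [[/= -> _]|[/= -> _]];
      rewrite ?hLd ?(negbTE Lrs) ?(negbTE Lsr).
  + move: hlt hlt'; rewrite /= -hll => hlt _.
    case: hp => [[/= -> hi]|[/= -> hi]]; case: hq => [[/= -> hj]|[/= -> hj]];
      rewrite ?Firr // => _; apply/eqP => eij; subst j;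
      by move: hlt; rewrite -hll in hj; rewrite -hi -hj ltnn.
- move=> i j /= hij.
  have hi := ltn_ord i; have hj := ltn_ord j.
  have bnd (x y : 'I_t1) : x * T + y < m.
    have h1 : x.+1 * T <= t1 * T by rewrite leq_mul2r ltn_ord orbT.
    have h2 : t1 * T <= T * T by rewrite leq_mul2r leqnSn orbT.
    have h3 : x.+1 * T = T + x * T by rewrite mulSn.
    move: hmK; rewrite -/T; have := ltn_ord y; rewrite -/T; lia.
  have e1 (x y : 'I_t1) : (x * T + y) %/ T = x.
    by rewrite divnMDl // divn_small ?addn0 // /T ltnS ltnW.
  have e2 (x y : 'I_t1) : (x * T + y) %% T = y.
    by rewrite modnMDl modn_small // /T ltnS ltnW.
  case: (ltngtP i j) => h.
  + exists (Ordinal (bnd i j), r), (Ordinal (bnd i j), s); split.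
    * by rewrite /psi /= e1 e2 h eqxx; apply: insub_ordE.
    * by rewrite /psi /= e1 e2 h eq_sym (negbTE hrs) eqxx; apply: insub_ordE.
    * by rewrite AE /Aval /= ltnn.
  + exists (Ordinal (bnd j i), s), (Ordinal (bnd j i), r); split.
    * by rewrite /psi /= e1 e2 h eq_sym (negbTE hrs) eqxx; apply: insub_ordE.
    * by rewrite /psi /= e1 e2 h eqxx; apply: insub_ordE.
    * by rewrite AE /Aval /= ltnn Fsym.
  + by move: hij; rewrite /Kadj (ord_inj h) eqxx.
Qed.

Definition o0 : 'I_4 := @Ordinal 4 0 isT.
Definition o1 : 'I_4 := @Ordinal 4 1 isT.
Definition o2 : 'I_4 := @Ordinal 4 2 isT.
Definition o3 : 'I_4 := @Ordinal 4 3 isT.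

Lemma I4E (x : 'I_4) : [\/ x = o0, x = o1, x = o2 | x = o3].
Proof.
case: x => [[|[|[|[|k]]]] hk]; [constructor 1|constructor 2|constructor 3|constructor 4|by []];
  exact: ord_inj.
Qed.

Lemma Ftab q q' : F q q' =
  tb6 (F o0 o1) (F o0 o2) (F o0 o3) (F o1 o2) (F o1 o3) (F o2 o3) q q'.
Proof.
by case: (I4E q) => ->; case: (I4E q') => ->; rewrite /= ?Firr // Fsym.
Qed.

Section Blow.
Variables (tb : nat -> nat -> bool) (Lam : bool -> nat -> nat).
Hypothesis AB : forall p q, A p q = tb p.2 q.2.
Let bs := [:: false; true].
Hypothesis h1 : all (fun c => all (fun c' => all (fun q => all (fun q' =>
  (tb q q' && (Lam c q < 3) && (Lam c' q' < 3)) ==> (Lam c q != Lam c' q'))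
  (iota 0 4)) (iota 0 4)) bs) bs.
Hypothesis h2 : all (fun a => all (fun b => (a != b) ==> has (fun c => has (fun c' =>
  has (fun q => has (fun q' => [&& Lam c q == a, Lam c' q' == b & tb q q'])
  (iota 0 4)) (iota 0 4)) bs) bs) (iota 0 3)) (iota 0 3).
Hypothesis h3 : all (fun a => has (fun c => has (fun q => Lam c q == a) (iota 0 4)) bs)
  (iota 0 3).

Definition bpsi (p : 'I_m * 'I_4) : option ('I_3 * 'I_t2) :=
  let c := ~~ (p.1 < t2) in
  match (insub (if c then p.1 - t2 else p.1) : option 'I_t2),
        (insub (Lam c p.2) : option 'I_3) with
  | Some i, Some a => Some (a, i)
  | _, _ => None
  end.

Lemma idx_lt c (i : 'I_t2) : (if c then t2 + i else i) < m.
Proof. by case: c; have := ltn_ord i; lia. Qed.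

Lemma bpsiE c (i : 'I_t2) (q : 'I_4) (a : 'I_3) :
  Lam c q = a -> bpsi (Ordinal (idx_lt c i), q) = Some (a, i).
Proof.
move=> hq; rewrite /bpsi /=.
have hc : ~~ ((if c then t2 + i else i) < t2) = c.
  by case: c {hq}; have := ltn_ord i; lia.
rewrite hc hq (insub_ordE (erefl (val a))).
have -> : (if c then (if c then t2 + i else i) - t2 else (if c then t2 + i else i)) = i.
  by case: c {hc hq}; rewrite ?addKn.
by rewrite (@insub_ordE _ _ i).
Qed.

Lemma bpsi_inv p a i : bpsi p = Some (a, i) -> exists c, Lam c p.2 = a.
Proof.
rewrite /bpsi; case: insub => // i'; case e: insub => [a'|] // [<- _].
by exists (~~ (p.1 < t2)); rewrite -(insub_ordP e).
Qed.

Lemma blowup : TF.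
Proof.
exists bpsi; split.
- move=> [a i].
  have ha : (a : nat) \in iota 0 3 by rewrite mem_iota; have := ltn_ord a; lia.
  have /hasP [c _ /hasP [q hq /eqP hl]] := allP h3 _ ha.
  have hq4 : q < 4 by move: hq; rewrite mem_iota; lia.
  by exists (Ordinal (idx_lt c i), Ordinal hq4); apply: bpsiE.
- move=> p q [a i] [b j] /bpsi_inv [c hc] /bpsi_inv [c' hc']; rewrite AB /= /K3adj /= => e.
  apply/negP => /eqP eab; subst b.
  have hc0 : c \in bs by case: c {hc}.
  have hc0' : c' \in bs by case: c' {hc'}.
  have hp : (p.2 : nat) \in iota 0 4 by rewrite mem_iota; have := ltn_ord p.2; lia.
  have hq : (q.2 : nat) \in iota 0 4 by rewrite mem_iota; have := ltn_ord q.2; lia.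
  have := allP (allP (allP (allP h1 _ hc0) _ hc0') _ hp) _ hq.
  by rewrite e hc hc' !ltn_ord eqxx.
- move=> [a i] [b j]; rewrite /= /K3adj /= => hab.
  have ha : (a : nat) \in iota 0 3 by rewrite mem_iota; have := ltn_ord a; lia.
  have hb : (b : nat) \in iota 0 3 by rewrite mem_iota; have := ltn_ord b; lia.
  have hab' : (a : nat) != b by [].
  have := allP (allP h2 _ ha) _ hb; rewrite hab' implyTb.
  move=> /hasP [c _ /hasP [c' _ /hasP [q hq /hasP [q' hq' /and3P [/eqP e1 /eqP e2 e3]]]]].
  have hq4 : q < 4 by move: hq; rewrite mem_iota; lia.
  have hq4' : q' < 4 by move: hq'; rewrite mem_iota; lia.
  exists (Ordinal (idx_lt c i), Ordinal hq4), (Ordinal (idx_lt c' j), Ordinal hq4'); split.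
  + exact: bpsiE.
  + exact: bpsiE.
  + by rewrite AB.
Qed.
End Blow.

Definition bs := [:: false; true].
Definition blow_ok (tb : nat -> nat -> bool) (Lam : bool -> nat -> nat) :=
  [&& all (fun c => all (fun c' => all (fun q => all (fun q' =>
  (tb q q' && (Lam c q < 3) && (Lam c' q' < 3)) ==> (Lam c q != Lam c' q'))
  (iota 0 4)) (iota 0 4)) bs) bs,
  all (fun a => all (fun b => (a != b) ==> has (fun c => has (fun c' =>
  has (fun q => has (fun q' => [&& Lam c q == a, Lam c' q' == b & tb q q'])
  (iota 0 4)) (iota 0 4)) bs) bs) (iota 0 3)) (iota 0 3)
  & all (fun a => has (fun c => has (fun q => Lam c q == a) (iota 0 4)) bs)
  (iota 0 3)].

Lemma blowup' (tb : nat -> nat -> bool) (Lam : bool -> nat -> nat) : (forall p q, A p q = tb p.2 q.2) -> blow_ok tb Lam -> TF.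
Proof. by move=> AB /and3P [h1 h2 h3]; apply: (blowup AB h1 h2 h3). Qed.

Definition LamT012 (c : bool) (q : nat) := if c then 3 else if q < 3 then q else 3.
Definition LamT013 (c : bool) (q : nat) :=
  if c then 3 else match q with 0 => 0 | 1 => 1 | 3 => 2 | _ => 3 end.
Definition Lam2K2 (c : bool) (q : nat) :=
  if c then (if q == 0 then 2 else 3)
  else match q with 0 => 0 | 1 => 1 | 2 => 0 | 3 => 2 | _ => 3 end.
Definition LamP4a (c : bool) (q : nat) :=
  if c then 3 else match q with 3 => 0 | 0 => 1 | 1 => 2 | 2 => 2 | _ => 3 end.
Definition LamP4b (c : bool) (q : nat) :=
  if c then 3 else match q with 1 => 0 | 3 => 1 | 0 => 2 | 2 => 2 | _ => 3 end.

Lemma structure :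
  (F o0 o1 && F o1 o2 && F o0 o2) || [&& F o0 o1, F o2 o3, ~~ F o0 o2 & ~~ F o1 o2] ->
  KF \/ TF.
Proof.
move=> pat.
case: (pickP (fun r => L r r)) => [r hr|hLd]; first by left; apply: (caseC1 hr).
case: (pickP (fun rs : 'I_4 * 'I_4 => [&& rs.1 != rs.2, L rs.1 rs.2 & ~~ L rs.2 rs.1]))
  => [[r s] /and3P [hrs Lrs Lsr]|h2]; first by left; apply: (caseC2 hrs Lrs Lsr hLd).
case: (pickP (fun rs : 'I_4 * 'I_4 => [&& rs.1 != rs.2, L rs.1 rs.2 & ~~ F rs.1 rs.2]))
  => [[r s] /and3P [hrs Lrs Frs]|h3].
  left; apply: (caseC3 hrs Lrs _ Frs).
  by move: (h2 (r, s)); rewrite /= hrs Lrs /=; case: (L s r).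
case: (pickP (fun rs : 'I_4 * 'I_4 => [&& rs.1 != rs.2, ~~ L rs.1 rs.2 & F rs.1 rs.2]))
  => [[r s] /and3P [hrs Lrs Frs]|h4].
  left; apply: (caseC4 hrs Lrs _ Frs hLd).
  apply/negP => e; move: (h2 (s, r)); by rewrite /= eq_sym hrs e (negbTE Lrs).
have LF r s : L r s = F r s.
  case: (eqVneq r s) => [<-|hrs]; first by rewrite hLd Firr.
  case e: (L r s).
    by move: (h3 (r, s)); rewrite /= hrs e /=; case: (F r s).
  by move: (h4 (r, s)); rewrite /= hrs e /=; case: (F r s).
have AB p q : A p q = tb6 (F o0 o1) (F o0 o2) (F o0 o3) (F o1 o2) (F o1 o3) (F o2 o3) p.2 q.2.
  rewrite AE /Aval -Ftab !LF Fsym.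
  by case: ltngtP => //; rewrite Fsym.
case/orP: pat => [/andP [/andP [f01 f12] f02]|/and4P [f01 f23 f02 f12]].
  move: AB; rewrite f01 f12 f02.
  move: (F o0 o3) (F o1 o3) (F o2 o3) => b03 b13 b23 AB.
  right; apply: (blowup' AB (Lam := LamT012)).
  by case: b03 {AB}; case: b13; case: b23; vm_compute.
move: AB; rewrite f01 f23 (negbTE f02) (negbTE f12).
move: (F o0 o3) (F o1 o3) => b03 b13 AB; right.
case: b03 AB; case: b13 => AB.
- by apply: (blowup' AB (Lam := LamT013)); vm_compute.
- by apply: (blowup' AB (Lam := LamP4a)); vm_compute.
- by apply: (blowup' AB (Lam := LamP4b)); vm_compute.
- by apply: (blowup' AB (Lam := Lam2K2)); vm_compute.
Qed.
End Struct.

Section Ramsey.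
Variable T : eqType.

Lemma ramsey2 (c : T -> T -> bool) : forall a b (X : seq T), 2 ^ (a + b) <= size X ->
  exists Y, subseq Y X /\
    ((a <= size Y /\ pairwise c Y) \/ (b <= size Y /\ pairwise (fun x y => ~~ c x y) Y)).
Proof.
elim=> [|a IHa] b X hX; first by exists [::]; split; [exact: sub0seq | left].
elim: b X hX => [|b IHb] X hX; first by exists [::]; split; [exact: sub0seq | right].
case: X hX => [|x X'] hX; first by move: hX; rewrite leqNgt expn_gt0.
pose X1 := [seq y <- X' | c x y].
pose X2 := [seq y <- X' | ~~ c x y].
have hs : size X1 + size X2 = size X'.
  by rewrite !size_filter count_predC.
have e2 : a.+1 + b = a + b.+1 by rewrite addSnnS.
have e1 : 2 ^ (a.+1 + b.+1) = 2 ^ (a + b.+1) + 2 ^ (a.+1 + b).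
  by rewrite e2 addSn expnS mul2n addnn.
move: hX; rewrite /= e1 => hX.
have [h1|h2] : 2 ^ (a + b.+1) <= size X1 \/ 2 ^ (a.+1 + b) <= size X2.
  have : 2 ^ (a + b.+1) + 2 ^ (a.+1 + b) <= size X1 + size X2 + 1.
    by rewrite hs addn1.
  have p1 : 0 < 2 ^ (a + b.+1) by rewrite expn_gt0.
  have p2 : 0 < 2 ^ (a.+1 + b) by rewrite expn_gt0.
  lia.
- have [Y [hY [[ha hp]|[hb hp]]]] := IHa _ _ h1.
  + exists (x :: Y); split.
      by rewrite /= eqxx (subseq_trans hY) // filter_subseq.
    left; split => //; rewrite pairwise_cons hp andbT.
    by apply/allP => y /(mem_subseq hY); rewrite mem_filter => /andP [].
  + exists Y; split; last by right.
    exact: (subseq_trans hY (subseq_trans (filter_subseq _ X') (subseq_cons X' x))).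
- have [Y [hY [[ha hp]|[hb hp]]]] := IHb _ h2.
  + exists Y; split; last by left.
    exact: (subseq_trans hY (subseq_trans (filter_subseq _ X') (subseq_cons X' x))).
  + exists (x :: Y); split.
      by rewrite /= eqxx (subseq_trans hY) // filter_subseq.
    right; split => //; rewrite pairwise_cons hp andbT.
    by apply/allP => y /(mem_subseq hY); rewrite mem_filter => /andP [].
Qed.

Fixpoint Rn (n m : nat) : nat := if n is n'.+1 then 2 ^ (Rn n' m + Rn n' m) else m.

Lemma ramseyN (cs : nat -> T -> T -> bool) m : forall n (X : seq T), Rn n m <= size X ->
  exists Y, [/\ subseq Y X, m <= size Y &
    forall k, k < n -> exists beta, pairwise (fun x y => cs k x y == beta) Y].
Proof.
elim=> [|n IH] X hX; first by exists X; split.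
have [Y0 [hY0 hc]] := ramsey2 (cs n) hX.
have [hs0 [beta hb]] : Rn n m <= size Y0 /\
    exists beta, pairwise (fun x y => cs n x y == beta) Y0.
  case: hc => [[hs hp]|[hs hp]]; split => //.
  - by exists true; apply: sub_pairwise hp => x y ->.
  - by exists false; apply: sub_pairwise hp => x y /negbTE ->.
have [Y [hY hm hk]] := IH _ hs0.
exists Y; split => //; first exact: subseq_trans hY hY0.
move=> k; rewrite ltnS leq_eqVlt => /orP [/eqP ->|hkn]; last exact: hk.
by exists beta; apply: subseq_pairwise hY hb.
Qed.
End Ramsey.

Lemma disj_set0 (T : finType) (A : {set T}) : [disjoint A & set0].
Proof. by rewrite disjoint_sym; apply: eq_disjoint0 => x; rewrite inE. Qed.

Section Obs.
Variable H : sgraph.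
Local Notation V := (vert H).
Local Notation adj := (adj H).

Definition pat4 (F : 'I_4 -> 'I_4 -> bool) :=
  (F o0 o1 && F o1 o2 && F o0 o2) || [&& F o0 o1, F o2 o3, ~~ F o0 o2 & ~~ F o1 o2].

Definition obs (o : {ffun 'I_4 -> V}) :=
  injectiveb o && pat4 (fun r s => adj (o r) (o s)).

Definition mk4 (x y z w : V) : {ffun 'I_4 -> V} := [ffun i : 'I_4 => nth x [:: x; y; z; w] i].

Lemma mk4_inj x y z w : uniq [:: x; y; z; w] -> injectiveb (mk4 x y z w).
Proof.
move=> hu; apply/injectiveP => i j; rewrite !ffunE => /eqP.
by rewrite nth_uniq // => /eqP /ord_inj.
Qed.

Lemma mk4_out (S : {set V}) x y z w : x \notin S -> y \notin S -> z \notin S -> w \notin S ->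
  forall i, mk4 x y z w i \notin S.
Proof. by move=> hx hy hz hw i; case: (I4E i) => ->; rewrite ffunE. Qed.

Variable S : {set V}.
Hypothesis hS : forall o, obs o -> exists i, o i \in S.

Lemma no_obs x y z w : x \notin S -> y \notin S -> z \notin S -> w \notin S ->
  obs (mk4 x y z w) -> False.
Proof.
move=> hx hy hz hw /hS [i]; by rewrite (negbTE (mk4_out hx hy hz hw i)).
Qed.

Lemma adj_neq x y : adj x y -> x != y.
Proof. by apply: contraTneq => ->; rewrite adj_irr. Qed.

Lemma Nprop x y w z : x \notin S -> y \notin S -> w \notin S -> z \notin S ->
  x != y -> ~~ adj x y -> adj x w -> adj y z -> adj y w.
Proof.
move=> hx hy hw hz hxy nxy xw yz; apply: contraT => nyw; exfalso.
apply: (no_obs hx hw hy hz); apply/andP; split.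
  apply: mk4_inj => /=; rewrite !inE !negb_or.
  rewrite hxy (adj_neq xw) (adj_neq yz) /=.
  have -> : x != z by apply: contraNneq nxy => ->; rewrite adj_sym.
  have -> : w != y by apply: contraNneq nxy => <-.
  have -> : w != z by apply: contraNneq nyw => ->.
  by [].
rewrite /pat4 !ffunE /= xw yz nxy /= adj_sym nyw.
by rewrite orbT.
Qed.

Lemma tri_free x y z w : x \notin S -> y \notin S -> z \notin S -> w \notin S ->
  w \notin [:: x; y; z] -> adj x y -> adj y z -> adj x z -> False.
Proof.
move=> hx hy hz hw hwn xy yz xz; apply: (no_obs hx hy hz hw); apply/andP; split.
  apply: mk4_inj => /=; rewrite !inE !negb_or (adj_neq xy) (adj_neq yz) (adj_neq xz) /=.
  move: hwn; rewrite !inE !negb_or => /and3P [h1 h2 h3].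
  by rewrite (eq_sym x w) (eq_sym y w) (eq_sym z w) h1 h2 h3.
by rewrite /pat4 !ffunE /= xy yz xz.
Qed.

Lemma dist_from_S : dist_ext_biclique_le H (#|S| + 3).
Proof.
case: (leqP #|~: S| 3) => hsmall.
  exists setT, set0, set0; split; rewrite ?disj_set0 //.
    by rewrite cardsT -(cardsC S) leq_add2l.
  by move=> x y; rewrite inE.
have tri x y z : x \notin S -> y \notin S -> z \notin S -> adj x y -> adj y z -> adj x z -> False.
  move=> hx hy hz xy yz xz.
  case: (pickP (fun w => (w \notin S) && (w \notin [:: x; y; z]))) => [w /andP [hw hwn]|hn].
    exact: (tri_free hx hy hz hw hwn xy yz xz).
  have : ~: S \subset [:: x; y; z].
    apply/subsetP => w; rewrite inE => hw; move: (hn w); rewrite hw /=.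
    by move/negbT; rewrite negbK.
  move/subset_leq_card => h; have := card_size [:: x; y; z]; move: hsmall h => /=.
  move=> h1 h2 h3. have : 3 < 3 by apply: leq_trans h1 (leq_trans h2 h3). by [].
case: (pickP (fun e : V * V => [&& e.1 \notin S, e.2 \notin S & adj e.1 e.2]))
  => [[x0 y0] /and3P [hx0 hy0 xy0]|hn]; last first.
  exists S, set0, set0; split; rewrite ?disj_set0 ?leq_addr //.
  move=> x y hx hy; rewrite !inE /=; move: (hn (x, y)); rewrite /= hx hy /=.
  by move=> ->.
pose A := [set z | (z \notin S) && adj y0 z].
pose B := [set z | (z \notin S) && adj x0 z].
have memAB z nb : z \notin S -> nb \notin S -> adj z nb -> (z \in A) || (z \in B).
  move=> hz hnb znb; rewrite !inE hz /=.
  case e: (adj x0 z); first by rewrite orbT.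
  case: (eqVneq z x0) => [->|hzx]; first by rewrite adj_sym xy0.
  rewrite orbF adj_sym; apply: (Nprop hx0 hz hy0 hnb) => //.
    by rewrite eq_sym.
  by rewrite e.
exists S, A, B; split; rewrite ?leq_addr //.
- by apply/pred0P => z /=; rewrite !inE; case: (z \in S).
- by apply/pred0P => z /=; rewrite !inE; case: (z \in S).
- apply/pred0P => z /=; rewrite !inE; apply/negP => /andP [/andP [hz h1] /andP [_ h2]].
  exact: (tri _ _ _ hx0 hy0 hz xy0 h1 h2).
move=> x y hx hy.
have back u w : u \notin S -> w \notin S -> adj y0 u -> adj x0 w -> adj u w.
  move=> hu hw h1 h2; apply: contraT => nuw; exfalso.
  case: (eqVneq u w) => [e|huw].
    subst w; exact: (tri _ _ _ hx0 hy0 hu xy0 h1 h2).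
  have := Nprop hu hw hy0 hx0 huw nuw; rewrite adj_sym => /(_ h1).
  rewrite adj_sym => /(_ h2) h3.
  exact: (tri _ _ _ hx0 hw hy0 h2 h3 xy0).
apply/idP/idP => [xy|].
  have := memAB x y hx hy xy; have := memAB y x hy hx; rewrite adj_sym => /(_ xy).
  rewrite !inE hx hy /= => hyAB hxAB.
  case/orP: hxAB => hxA; case/orP: hyAB => hyA; rewrite ?hxA ?hyA ?orbT //.
  + by exfalso; apply: (tri _ _ _ hy0 hx hy) => //; rewrite adj_sym.
  + by exfalso; apply: (tri _ _ _ hx0 hx hy) => //; rewrite adj_sym.
rewrite !inE hx hy /= => /orP [/andP [h1 h2]|/andP [h1 h2]].
  exact: back.
by rewrite adj_sym; apply: back.
Qed.
End Obs.

Section Greedy.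
Variable H : sgraph.
Definition dis (o o' : {ffun 'I_4 -> vert H}) := [forall i, forall j, o i != o' j].

Lemma size_flat (fam : seq {ffun 'I_4 -> vert H}) :
  size (flatten (map (fun o : {ffun 'I_4 -> vert H} => codom o) fam)) = 4 * size fam.
Proof.
by elim: fam => //= o fam IH; rewrite size_cat size_codom card_ord IH mulnS.
Qed.

Lemma greedy k :
  (exists S : {set vert H}, #|S| <= 4 * k /\ forall o, obs o -> exists i, o i \in S) \/
  (exists fam, [/\ size fam = k, all (@obs H) fam & pairwise dis fam]).
Proof.
elim: k => [|k [[S [hS hobs]]|[fam [hsz hall hpw]]]].
- by right; exists [::].
- left; exists S; split => //; lia.
pose S := [set x | x \in flatten (map (fun o : {ffun 'I_4 -> vert H} => codom o) fam)].
have hSc : #|S| <= 4 * k.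
  rewrite -hsz -size_flat; apply: leq_trans (card_size _).
  by apply: subset_leq_card; apply/subsetP => x; rewrite inE.
case: (pickP (fun o => obs o && [forall i, o i \notin S])) => [o /andP [ho hout]|hn].
  right; exists (o :: fam); split => /=; first by rewrite hsz.
    by rewrite ho hall.
  rewrite hpw andbT; apply/allP => o' ho'; apply/forallP => i; apply/forallP => j.
  have h2 : o' j \in S.
    by rewrite inE; apply/flattenP; exists (codom o'); [apply: map_f | apply: codom_f].
  move: (forallP hout i) => h1; apply: contraNneq h1 => ->; exact h2.
left; exists S; split; first by lia.
move=> o ho; move: (hn o); rewrite ho /= => /negbT; rewrite negb_forall.
by move=> /existsP [i]; rewrite negbK => hi; exists i.
Qed.
End Greedy.

Lemma lift_fam (H G : sgraph) (P : finType) (v : P -> vert H)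
  (psi : P -> option (vert G)) : injective v ->
  fam_ok (fun p q => adj H (v p) (v q)) G psi ->
  fam_ok (adj H) G (fun x => if [pick p | v p == x] is Some p then psi p else None).
Proof.
move=> hv [ha hc1 hc2].
have E p : (if [pick p' | v p' == v p] is Some p' then psi p' else None) = psi p.
  case: pickP => [p' /eqP /hv -> //|hn]; by move: (hn p); rewrite eqxx.
have I x i : (if [pick p | v p == x] is Some p then psi p else None) = Some i ->
    exists p, x = v p /\ psi p = Some i.
  case: pickP => [p /eqP <- hp|//]; by exists p.
split.
- move=> i; have [p hp] := ha i; exists (v p); by rewrite E.
- move=> x y i j /I [p [-> hp]] /I [q [-> hq]]; exact: hc1.
- move=> i j /hc2 [p [q [hp hq hpq]]]; exists (v p), (v q); by rewrite !E.
Qed.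

Section Glue.
Variables (C : graph_class) (HC : projection_closed C) (H : sgraph) (CH : C H)
  (t1 t2 : nat) (ht1 : 0 < t1) (ht2 : 0 < t2).

Definition Mb := t1.+1 * t1.+1 + 2 * t1 + 2 * t2 + 2.

Definition cs (k : nat) (o o' : {ffun 'I_4 -> vert H}) : bool :=
  let r : 'I_4 := inord (k %% 4) in let s : 'I_4 := inord ((k %/ 4) %% 4) in
  if k < 16 then adj H (o r) (o' s) else adj H (o' r) (o' s).

Lemma cs_cross (r s : 'I_4) o o' : cs (r + 4 * s) o o' = adj H (o r) (o' s).
Proof.
have hr := ltn_ord r; have hs := ltn_ord s.
rewrite /cs; have -> : r + 4 * s < 16 by lia.
have -> : (inord ((r + 4 * s) %% 4) : 'I_4) = r.
  by apply: ord_inj; rewrite inordK; lia.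
have -> : (inord ((r + 4 * s) %/ 4 %% 4) : 'I_4) = s.
  by apply: ord_inj; rewrite inordK; lia.
by [].
Qed.

Lemma cs_diag (r s : 'I_4) o o' : cs (16 + r + 4 * s) o o' = adj H (o' r) (o' s).
Proof.
have hr := ltn_ord r; have hs := ltn_ord s.
rewrite /cs; have -> : (16 + r + 4 * s < 16) = false by lia.
have -> : (inord ((16 + r + 4 * s) %% 4) : 'I_4) = r.
  by apply: ord_inj; rewrite inordK; lia.
have -> : (inord ((16 + r + 4 * s) %/ 4 %% 4) : 'I_4) = s.
  by apply: ord_inj; rewrite inordK; lia.
by [].
Qed.

Lemma glue fam : size fam = Rn 32 Mb.+1 -> all (@obs H) fam -> pairwise (@dis H) fam ->
  C (complete_graph t1) \/ C (complete_tripartite t2).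
Proof.
move=> hsz hall hpw.
have [Y [hY hm hk]] := ramseyN cs (m := Mb.+1) (n := 32) (X := fam) (eq_leq (esym hsz)).
clear hsz; case: Y hY hm hk => [|z0 Z] // hY hm hk.
have hZ : Mb <= size Z by [].
have hmK : t1.+1 * t1.+1 <= size Z by move: hZ; rewrite /Mb; clear; lia.
have hm1 : 2 * t1 <= size Z by move: hZ; rewrite /Mb; clear; lia.
have hm2 : 2 * t2 <= size Z by move: hZ; rewrite /Mb; clear; lia.
have m2 : 1 < size Z by move: hZ; rewrite /Mb; clear; lia.
have hallY : all (@obs H) (z0 :: Z).
  by apply/allP => o /(mem_subseq hY) ho; exact: (allP hall).
have hpwY : pairwise (@dis H) (z0 :: Z) := subseq_pairwise hY hpw.
have hallZ : forall l, l < size Z -> obs (nth z0 Z l).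
  move=> l hl; apply: (allP hallY); rewrite inE mem_nth ?orbT //.
have hpwZ : pairwise (@dis H) Z by move: hpwY; rewrite pairwise_cons => /andP [].
pose m := size Z.
have gt (x : nat) : x < m -> x \in gtn (size Z) by [].
pose v (p : 'I_m * 'I_4) := nth z0 Z p.1 p.2.
have hcross (r s : 'I_4) (l l' : nat) : l < l' -> l' < m ->
    adj H (nth z0 Z l r) (nth z0 Z l' s) = adj H (nth z0 Z 0 r) (nth z0 Z 1 s).
  move=> hll hl'.
  have [beta hb] := hk (r + 4 * s) (ltac:(have := ltn_ord r; have := ltn_ord s; clear; lia)).
  move: hb; rewrite pairwise_cons => /andP [_ /(pairwiseP z0) hb].
  have h1 := hb l l'; have h2 := hb 0 1.
  rewrite !cs_cross in h1 h2.
  have e1 := h1 (gt l (ltn_trans hll hl')) (gt l' hl') hll.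
  have e2 := h2 (gt 0 (ltnW m2)) (gt 1 m2) isT.
  by rewrite (eqP e1) (eqP e2).
have hdiag (r s : 'I_4) (l : nat) : l < m ->
    adj H (nth z0 Z l r) (nth z0 Z l s) = adj H (nth z0 Z 0 r) (nth z0 Z 0 s).
  move=> hl.
  have [beta hb] := hk (16 + r + 4 * s) (ltac:(have := ltn_ord r; have := ltn_ord s; clear; lia)).
  move: hb; rewrite pairwise_cons => /andP [/allP hb _].
  have e1 := hb (nth z0 Z l) (mem_nth _ hl).
  have e2 := hb (nth z0 Z 0) (mem_nth _ (ltnW m2)).
  rewrite !cs_diag in e1 e2.
  by rewrite (eqP e1) (eqP e2).
have vinj : injective v.
  move=> [l r] [l' s]; rewrite /v /= => e.
  case: (ltngtP l l') => hll.
  - have := pairwiseP z0 hpwZ l l' (gt l (ltn_ord l)) (gt l' (ltn_ord l')) hll.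
    by move=> /forallP /(_ r) /forallP /(_ s); rewrite e eqxx.
  - have := pairwiseP z0 hpwZ l' l (gt l' (ltn_ord l')) (gt l (ltn_ord l)) hll.
    by move=> /forallP /(_ s) /forallP /(_ r); rewrite e eqxx.
  - have el : l = l' by apply: ord_inj.
    subst l'; have := hallZ l (ltn_ord l); case/andP => /injectiveP hinj _.
    by rewrite (hinj _ _ e).
have := @structure m t1 t2 (fun p q => adj H (v p) (v q))
  (fun r s => adj H (nth z0 Z 0 r) (nth z0 Z 1 s))
  (fun r s => adj H (nth z0 Z 0 r) (nth z0 Z 0 s)).
case.
- by move=> p q; rewrite adj_sym.
- by move=> p; rewrite adj_irr.
- by move=> l l' r s hll; rewrite /v /= hcross.
- by move=> l r s; rewrite /v /= hdiag.
- exact: hmK.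
- exact: hm1.
- exact: hm2.
- by have := hallZ 0 (ltnW m2); case/andP.
- move=> [psi hpsi]; left.
  have i0 : vert (complete_graph t1) := Ordinal ht1.
  exact: (quotient_closed (G := complete_graph t1) HC i0 (erefl _) CH (lift_fam vinj hpsi)).
- move=> [psi hpsi]; right.
  have i0 : vert (complete_tripartite t2) := (ord0, Ordinal ht2).
  exact: (quotient_closed (G := complete_tripartite t2) HC i0 (erefl _) CH (lift_fam vinj hpsi)).
Qed.
End Glue.

Lemma dist_mono (H : sgraph) a b : a <= b -> dist_ext_biclique_le H a -> dist_ext_biclique_le H b.
Proof.
move=> hab [S [A [B [h1 h2 h3 h4 h5]]]]; exists S, A, B; split => //.
exact: leq_trans hab.
Qed.

Theorem theorem1p14 (C : graph_class) :
  projection_closed C ->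
  (forall t : nat, 0 < t -> C (complete_graph t)) \/
  (forall t : nat, 0 < t -> C (complete_tripartite t)) \/
  (exists mu : nat, forall H : sgraph, C H -> dist_ext_biclique_le H mu).
Proof.
move=> HC.
case: (classic (forall t : nat, 0 < t -> C (complete_graph t))) => [h|h1]; first by left.
case: (classic (forall t : nat, 0 < t -> C (complete_tripartite t))) => [h|h2].
  by right; left.
right; right.
have [t1 [ht1 nC1]] : exists t1, 0 < t1 /\ ~ C (complete_graph t1).
  apply: NNPP => hn; apply: h1 => t ht; apply: NNPP => nc; apply: hn; by exists t.
have [t2 [ht2 nC2]] : exists t2, 0 < t2 /\ ~ C (complete_tripartite t2).
  apply: NNPP => hn; apply: h2 => t ht; apply: NNPP => nc; apply: hn; by exists t.
exists (4 * Rn 32 (Mb t1 t2).+1 + 3) => H CH.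
case: (greedy H (Rn 32 (Mb t1 t2).+1)) => [[S [hS hobs]]|[fam [hsz hall hpw]]].
  apply: dist_mono (dist_from_S hobs); by rewrite leq_add2r.
by case: (glue HC CH ht1 ht2 hsz hall hpw).
Qed.
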